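(* In a public goods economy (as in the context), let $\mathbf{a}$ be an outcome with $\mathbf{0}<\mathbf{a}<\mathbf{1}$. Then $\mathbf{a}$ is Pareto efficient if and only if there exist directions $\mathbf{v}_{up}>\mathbf{0}$ and $\mathbf{v}_{down}<\mathbf{0}$ such that $\mathbf{d}_{\mathbf{v}_{up}}\mathbf{u}(\mathbf{a})\le\mathbf{0}$ and $\mathbf{d}_{\mathbf{v}_{down}}\mathbf{u}(\mathbf{a})\le\mathbf{0}$.
   Context: Agents $N=\{1,\dots,n\}$; outcomes are vectors in $[0,1]^n$. Vector orderings: $\mathbf{x}\ge\mathbf{y}$ (resp. $\le$) means $x_i\ge y_i$ (resp. $\le$) for all $i$; $\mathbf{x}>\mathbf{y}$ (resp. $<$) means strict inequality in every coordinate; $\mathbf{x}\gneq\mathbf{y}$ means $\mathbf{x}\ge\mathbf{y}$ and $x_j>y_j$ for some $j$. The utility function $\mathbf{u}:[0,1]^n\to[0,1]^n$ is continuous, concave, and has positive externalities: whenever $\mathbf{a}\gneq\mathbf{a}'$ and $a_i=a'_i$, then $u_i(\mathbf{a})>u_i(\mathbf{a}')$. $\mathbf{a}$ is Pareto efficient if there is no outcome $\mathbf{a}'$ with $\mathbf{u}(\mathbf{a}')\gneq\mathbf{u}(\mathbf{a})$. For $\mathbf{v}\in\mathbb{R}^n$, $\mathbf{d}_{\mathbf{v}}\mathbf{u}(\mathbf{a}):=\lim_{\lambda\to0^+}\frac{\mathbf{u}(\mathbf{a}+\lambda\mathbf{v})-\mathbf{u}(\mathbf{a})}{\lambda}$ is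 the one-sided directional derivative. *)

(* Defs.v *)
From mathcomp Require Import all_boot all_order all_algebra.
From mathcomp Require Import all_classical all_reals all_analysis.
Set Implicit Arguments. Unset Strict Implicit. Unset Printing Implicit Defensive.
Import Order.TTheory GRing.Theory Num.Theory.
Local Open Scope ring_scope.
Local Open Scope classical_set_scope.

Section Defs.
Variables (R : realType) (n : nat).
Local Notation vec := ('I_n -> R).

Definition vle (x y : vec) := forall i, x i <= y i.
Definition vlt (x y : vec) := forall i, x i < y i.
Definition vlne (x y : vec) := vle x y /\ exists j, x j < y j.

Definition vcst (c : R) : vec := fun _ => c.
Definition vadd (x y : vec) : vec := fun i => x i + y i.
Definition vscale (l : R) (x : vec) : vec := fun i => l * x i.

Definition outcome (a : vec) := forall i, 0 <= a i <= 1.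

(* u : [0,1]^n -> [0,1]^n, given as a total function, hypotheses on the cube *)
Definition maps_cube (u : vec -> vec) :=
  forall a, outcome a -> outcome (u a).

(* continuity on the cube (epsilon-delta, sup-distance = Euclidean topology) *)
Definition cont_on_cube (u : vec -> vec) :=
  forall a, outcome a -> forall eps : R, 0 < eps -> exists2 delta : R, 0 < delta &
    forall b, outcome b -> (forall j, `|b j - a j| < delta) ->
      forall i, `|u b i - u a i| < eps.

Definition concave_on_cube (u : vec -> vec) :=
  forall a b (t : R), outcome a -> outcome b -> 0 <= t <= 1 ->
    vle (vadd (vscale t (u a)) (vscale (1 - t) (u b)))
        (u (vadd (vscale t a) (vscale (1 - t) b))).

Definition positive_externalities (u : vec -> vec) :=
  forall a a' i, outcome a -> outcome a' -> vlne a' a -> a i = a' i ->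
    u a' i < u a i.

Definition public_goods_utility (u : vec -> vec) :=
  [/\ maps_cube u, cont_on_cube u, concave_on_cube u &
      positive_externalities u].

Definition pareto_efficient (u : vec -> vec) (a : vec) :=
  ~ exists a', outcome a' /\ vlne (u a) (u a').

Definition dir_deriv (u : vec -> vec) (a v d : vec) :=
  forall i, (fun l : R => (u (vadd a (vscale l v)) i - u a i) / l)
              @ (0 : R)^'+ --> (d i : R^o).
End Defs.
Notation vec R n := ('I_n -> R%type).

(* Main.v *)
Require Import Defs.
From mathcomp Require Import all_boot all_order all_algebra.
From mathcomp Require Import all_classical all_reals all_analysis.
From mathcomp Require Import lra ring.
Set Implicit Arguments. Unset Strict Implicit. Unset Printing Implicit Defensive.
Import Order.TTheory GRing.Theory Num.Theory.
Local Open Scope ring_scope.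
Local Open Scope classical_set_scope.



Section Gen.
Variables (R : realType) (n : nat).
Local Notation vec := ('I_n -> R).

Definition ev (j : 'I_n) : vec := fun i => (i == j)%:R.
Definition vneg (v : vec) : vec := fun i => - v i.
Definition vsum (v : vec) : R := \sum_i v i.

Lemma sum_ge0 (v : vec) : (forall i, 0 <= v i) -> 0 <= vsum v.
Proof. by move=> h; apply: sumr_ge0 => i _; exact: h. Qed.

Lemma le_sum_term (v : vec) k : (forall i, 0 <= v i) -> v k <= vsum v.
Proof.
move=> h; rewrite /vsum (bigD1 k) //= lerDl; apply: sumr_ge0 => i _; exact: h.
Qed.

Lemma sum_ev (z : vec) : (fun i => \sum_j z j * ev j i) = z.
Proof.
apply/funext => i; rewrite (bigD1 i) //= /ev eqxx mulr1 big1 ?addr0 // => j ji.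
by rewrite eq_sym (negbTE ji) mulr0.
Qed.

Lemma posmin (c : vec) (c0 : R) : 0 < c0 -> (forall i, 0 < c i) ->
  exists r, [/\ 0 < r, r <= c0 & forall i, r <= c i].
Proof.
move=> c00 cp; case: (pickP (fun _ : 'I_n => true)) => [i0 _ | none].
  case: (@arg_minP _ _ _ i0 xpredT c isT) => k _ H.
  exists (Num.min c0 (c k)); split.
  - by rewrite lt_min c00 cp.
  - by rewrite ge_min lexx.
  - by move=> i; rewrite ge_min (H i) ?orbT.
by exists c0; split => // i; have := none i.
Qed.

Lemma eps_le (x y c : R) : 0 <= c -> (forall e, 0 < e -> x <= y + e * c) -> x <= y.
Proof.
move=> c0 h; rewrite leNgt; apply/negP => yx.
have e0 : 0 < (x - y) / (2 * (c + 1)).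
  by apply: divr_gt0; [rewrite subr_gt0 | lra].
have := h _ e0; set e := (x - y) / (2 * (c + 1)).
have he : e * (2 * (c + 1)) = x - y by rewrite /e divfK //; lra.
nra.
Qed.

Lemma vadd_sub (x y : vec) : vadd x (fun i => y i - x i) = y.
Proof. by apply/funext => i; rewrite /vadd addrC subrK. Qed.

Section Hom.
Variable F : vec -> vec.
Hypothesis Fhom : forall t v, 0 < t -> F (vscale t v) = vscale t (F v).

Lemma hom_zero : F (vcst 0) = vcst 0.
Proof.
have E : vscale 2 (vcst 0) = vcst 0 :> vec by apply/funext => i; rewrite /vscale /vcst mulr0.
have := @Fhom 2 (vcst 0) (ltr0Sn R 1); rewrite E => h.
apply/funext => i; have := congr1 (fun f => f i) h; rewrite /vscale /vcst /= => e.
lra.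
Qed.

Lemma hom0 t v : 0 <= t -> F (vscale t v) = vscale t (F v).
Proof.
rewrite le_eqVlt => /orP [/eqP <-|]; last exact: Fhom.
have E : forall w : vec, vscale 0 w = vcst 0 by move=> w; apply/funext => i; rewrite /vscale mul0r.
by rewrite !E hom_zero.
Qed.
End Hom.

Section SL.
Variable F : vec -> vec.
Hypothesis Fhom : forall t v, 0 < t -> F (vscale t v) = vscale t (F v).
Hypothesis Fsadd : forall v w i, F v i + F w i <= F (vadd v w) i.

Lemma Fsum (s : seq 'I_n) (z : vec) (b : 'I_n -> vec) : (forall j, 0 <= z j) ->
  forall k, \sum_(j <- s) z j * F (b j) k <= F (fun i => \sum_(j <- s) z j * b j i) k.
Proof.
move=> z0; elim: s => [|j s IH] k.
  rewrite big_nil.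
  have -> : (fun i => \sum_(j <- [::]) z j * b j i) = vcst 0 by apply/funext => i; rewrite big_nil.
  by rewrite (hom_zero Fhom).
have -> : (fun i => \sum_(j0 <- j :: s) z j0 * b j0 i) =
   vadd (vscale (z j) (b j)) (fun i => \sum_(j0 <- s) z j0 * b j0 i).
  by apply/funext => i; rewrite big_cons.
rewrite big_cons; apply: le_trans (Fsadd _ _ k).
by rewrite (hom0 Fhom _ (z0 j)) /vscale lerD2l.
Qed.

Lemma Fpos (z : vec) : (forall j, 0 <= z j) ->
  forall k, \sum_j z j * F (ev j) k <= F z k.
Proof. by move=> z0 k; have := Fsum (index_enum _) ev z0 k; rewrite sum_ev. Qed.

Lemma Fneg (z : vec) : (forall j, 0 <= z j) ->
  forall k, \sum_j z j * F (vneg (ev j)) k <= F (vneg z) k.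
Proof.
move=> z0 k; have := Fsum (index_enum _) (fun j => vneg (ev j)) z0 k.
suff -> : (fun i => \sum_(j <- index_enum 'I_n) z j * vneg (ev j) i) = vneg z by [].
apply/funext => i; rewrite /vneg.
transitivity (- \sum_j z j * ev j i).
  by rewrite -sumrN; apply: eq_bigr => j _; rewrite mulrN.
by have := congr1 (fun f => f i) (sum_ev z) => /= ->.
Qed.
End SL.
End Gen.
Arguments ev {R n} j.
Lemma exmax (R : realType) n (i0 : 'I_n) (F : 'I_n -> R) : exists k, forall i, F i <= F k.
Proof. by case: (@arg_maxP _ _ _ i0 xpredT F isT) => k _ H; exists k => i; exact: H. Qed.



Section PF.
Variables (R : realType) (n : nat).
Local Notation vec := ('I_n -> R).
Variable M : vec -> vec.
Variables (dl K : R).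
Hypothesis n0 : (0 < n)%N.
Hypothesis Mhom : forall t v, 0 < t -> M (vscale t v) = vscale t (M v).
Hypothesis dl0 : 0 < dl.
Hypothesis K0 : 0 <= K.
Hypothesis Mlow : forall x z, (forall j, 0 <= z j) ->
  forall i, M x i + dl * vsum z <= M (vadd x z) i.
Hypothesis Mup : forall x z, (forall j, 0 <= z j) ->
  forall i, M (vadd x z) i <= M x i + K * vsum z.

Let i0 : 'I_n := Ordinal n0.

Lemma Mmono x y : vle x y -> forall i, M x i <= M y i.
Proof.
move=> h i; have hz : forall j, 0 <= y j - x j by move=> j; rewrite subr_ge0.
rewrite -(vadd_sub x y); apply: le_trans (Mlow _ hz i).
by rewrite lerDl; apply: mulr_ge0; [exact: ltW | exact: sum_ge0].
Qed.

Lemma Mlip x y : vle x y -> forall i, M y i <= M x i + K * vsum (fun j => y j - x j).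
Proof.
move=> h i; rewrite -{1}(vadd_sub x y); apply: Mup => j; by rewrite subr_ge0.
Qed.

Lemma Mposv (v : vec) : (forall j, 0 <= v j) -> forall i, dl * vsum v <= M v i.
Proof.
move=> v0 i; have := Mlow (vcst 0) v0 i.
have -> : vadd (vcst 0) v = v by apply/funext => j; rewrite /vadd /vcst add0r.
by rewrite (hom_zero Mhom) /vcst add0r.
Qed.

Lemma sum_pos (v : vec) : (forall i, 0 < v i) -> 0 < vsum v.
Proof.
move=> vp; apply: lt_le_trans (vp i0) _; apply: le_sum_term => j; exact: ltW.
Qed.

Definition Lam := [set l : R | exists v : vec, (forall i, 0 < v i) /\ forall i, M v i <= l * v i].
Definition lst := inf Lam.

Lemma Lam_lb l : Lam l -> dl <= l.
Proof.
move=> [v [vp h]]; have h1 := Mposv (fun j => ltW (vp j)) i0.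
have h2 := h i0; have h3 := le_sum_term i0 (fun j => ltW (vp j)).
have h4 := vp i0.
have h5 : dl * v i0 <= dl * vsum v by rewrite ler_pM2l.
rewrite leNgt; apply/negP => ldl.
have : (dl - l) * v i0 > 0 by rewrite mulr_gt0 // subr_gt0.
nra.
Qed.

Lemma Lam_ne : Lam (K * n%:R).
Proof.
exists (vcst 1); split => [i|i]; first by rewrite /vcst ltr01.
have := Mup (vcst 0) (fun j => @ler01 R) i.
have -> : vadd (vcst 0) (vcst 1) = vcst 1 :> vec by apply/funext => j; rewrite /vadd /vcst add0r.
rewrite (hom_zero Mhom) /vcst add0r /vsum sumr_const card_ord.
by rewrite mulr1.
Qed.

Lemma lst_ge : dl <= lst.
Proof. by apply: lb_le_inf; [exists (K * n%:R); exact: Lam_ne | move=> l; exact: Lam_lb]. Qed.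

Lemma lst_le l : Lam l -> lst <= l.
Proof. by move=> hl; apply: ge_inf => //; exists dl => m; exact: Lam_lb. Qed.

Lemma lst_pos : 0 < lst.
Proof. exact: lt_le_trans dl0 lst_ge. Qed.

Definition Aset l := [set v : vec | (forall i, 0 < v i) /\ vsum v = 1 /\ forall i, M v i <= l * v i].

Lemma Aset_ne l : lst < l -> exists v, Aset l v.
Proof.
move=> hl; have [l' [v [vp hv]] l'l] := inf_lt (ex_intro _ _ Lam_ne) hl.
have s0 := sum_pos vp; set s := vsum v in s0.
have si : 0 < s^-1 by rewrite invr_gt0.
exists (vscale s^-1 v); split; [|split].
- by move=> i; rewrite /vscale mulr_gt0.
- by rewrite /vsum /vscale -mulr_sumr -/(vsum v) mulVf // gt_eqF.
- move=> i; rewrite Mhom // /vscale.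
  apply: (@le_trans _ _ (s^-1 * (l' * v i))); first by rewrite ler_pM2l // hv.
  by rewrite mulrCA ler_pM2r ?mulr_gt0 // ltW.
Qed.

Lemma Aset_bnd l v i : Aset l v -> 0 < l -> dl / l <= v i /\ v i <= 1.
Proof.
move=> [vp [vs hv]] l0; split.
  rewrite ler_pdivrMr //; have := Mposv (fun j => ltW (vp j)) i; rewrite vs mulr1.
  by move=> h; apply: le_trans h _; rewrite mulrC; exact: hv.
by rewrite -vs; apply: le_sum_term => j; exact: ltW.
Qed.

Definition wl l i := inf [set v i | v in Aset l].

Lemma lt_lst_pos l : lst < l -> 0 < l.
Proof. by move=> h; exact: lt_trans lst_pos h. Qed.

Lemma wl_lb l i : lst < l -> dl / l <= wl l i.
Proof.
move=> hl; apply: lb_le_inf.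
  by have [v hv] := Aset_ne hl; exists (v i), v.
by move=> _ [v hv <-]; apply: (Aset_bnd i hv (lt_lst_pos hl)).1.
Qed.

Lemma wl_le l v i : lst < l -> Aset l v -> wl l i <= v i.
Proof.
move=> hl hv; apply: ge_inf; last by exists v.
exists 0 => _ [w [wp _] <-]; exact: ltW.
Qed.

Lemma wl_le1 l i : lst < l -> wl l i <= 1.
Proof.
move=> hl; have [v hv] := Aset_ne hl; apply: le_trans (wl_le i hl hv) _.
exact: (Aset_bnd i hv (lt_lst_pos hl)).2.
Qed.

Lemma wl_M l i : lst < l -> M (wl l) i <= l * wl l i.
Proof.
move=> hl; have l0 := lt_lst_pos hl.
rewrite mulrC -ler_pdivrMr //; apply: lb_le_inf.
  by have [v hv] := Aset_ne hl; exists (v i), v.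
move=> _ [v hv <-]; rewrite ler_pdivrMr // mulrC.
apply: le_trans (hv.2.2 i); apply: Mmono => j; exact: wl_le.
Qed.

Lemma wl_anti l m i : lst < l -> l <= m -> wl m i <= wl l i.
Proof.
move=> hl lm; have hm := lt_le_trans hl lm; apply: lb_le_inf.
  by have [v hv] := Aset_ne hl; exists (v i), v.
move=> _ [v [vp [vs hv]] <-]; apply: wl_le => //; split => //; split => // j.
apply: le_trans (hv j) _; rewrite ler_pM2r //.
Qed.

Definition Iset := [set l : R | lst < l /\ l <= lst + 1].
Definition ws i := sup [set wl l i | l in Iset].
Definition sig := sup [set vsum (wl l) | l in Iset].

Lemma Iset_ne : Iset (lst + 1).
Proof. by split => //; rewrite ltrDl ltr01. Qed.

Lemma ws_ge l i : Iset l -> wl l i <= ws i.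
Proof.
move=> hl; apply: ub_le_sup; last by exists l.
by exists 1 => _ [m [hm _] <-]; exact: wl_le1.
Qed.

Lemma ws_le1 i : ws i <= 1.
Proof.
apply: ge_sup; first by exists (wl (lst + 1) i), (lst + 1); last by []; exact: Iset_ne.
by move=> _ [m [hm _] <-]; exact: wl_le1.
Qed.

Lemma ws_pos i : 0 < ws i.
Proof.
apply: (@lt_le_trans _ _ (wl (lst + 1) i)); last exact: (ws_ge i Iset_ne).
apply: (@lt_le_trans _ _ (dl / (lst + 1))); last exact: (wl_lb i Iset_ne.1).
by apply: divr_gt0 => //; apply: lt_lst_pos; exact: Iset_ne.1.
Qed.

Lemma vsum_le1 l : lst < l -> vsum (wl l) <= n%:R.
Proof.
move=> hl; have -> : (n%:R : R) = \sum_(i < n) 1 by rewrite sumr_const card_ord.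
by apply: ler_sum => i _; exact: wl_le1.
Qed.

Lemma approx eta : 0 < eta ->
  exists l, [/\ Iset l, l <= lst + eta & forall i, ws i <= wl l i + eta].
Proof.
move=> e0.
have hs : has_sup [set vsum (wl l) | l in Iset].
  split; first by exists (vsum (wl (lst + 1))), (lst + 1); last by []; exact: Iset_ne.
  by exists n%:R => _ [m [hm _] <-]; exact: vsum_le1.
have [_ [l0 hl0 <-] hlt] := sup_adherent e0 hs.
set l1 := Num.min l0 (lst + eta).
have hl1 : Iset l1.
  split; first by rewrite lt_min hl0.1 ltrDl e0.
  by rewrite ge_min hl0.2.
have l1l0 : l1 <= l0 by rewrite ge_min lexx.
exists l1; split => //; first by rewrite ge_min lexx orbT.
have s1 : vsum (wl l0) <= vsum (wl l1).
  by apply: ler_sum => j _; apply: wl_anti => //; exact: hl1.1.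
move=> i; apply: ge_sup; first by exists (wl l1 i), l1.
move=> _ [m hm <-]; case: (lerP m l1) => ml1.
- have hmj : forall j, 0 <= wl m j - wl l1 j.
    by move=> j; rewrite subr_ge0; apply: wl_anti => //; exact: hm.1.
  have := le_sum_term i hmj; rewrite /vsum sumrB -!/(vsum _).
  have : vsum (wl m) <= sig.
    by apply: ub_le_sup; [exact: hs.2 | exists m].
  rewrite -/sig in hlt; lra.
- have := wl_anti i hl1.1 (ltW ml1); lra.
Qed.

Lemma ws_M i : M ws i <= lst * ws i.
Proof.
apply: (eps_le (c := ws i + K * n%:R)).
  by apply: addr_ge0; [exact: ltW (ws_pos i) | apply: mulr_ge0 => //; exact: ler0n].
move=> e e0; have [l [hl hle hw]] := approx e0.
have vle1 : vle (wl l) ws by move=> j; exact: ws_ge.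
have h1 := Mlip vle1 i.
have h2 : vsum (fun j => ws j - wl l j) <= n%:R * e.
  have -> : (n%:R : R) * e = \sum_(j < n) e by rewrite sumr_const card_ord mulr_natl.
  by apply: ler_sum => j _; have := hw j; lra.
have h3 := wl_M i hl.1.
have h4 := ws_ge i hl.
have h5 := ws_pos i.
have h6 : 0 < l by exact: lt_lst_pos hl.1.
have h7 : K * vsum (fun j => ws j - wl l j) <= K * (n%:R * e) by rewrite ler_wpM2l.
have h8 : l * wl l i <= (lst + e) * ws i.
  by apply: le_trans (_ : l * ws i <= _); [rewrite ler_pM2l | rewrite ler_pM2r].
nra.
Qed.

Lemma ws_eig i : M ws i = lst * ws i.
Proof.
set d := fun j => lst * ws j - M ws j.
have d0 : forall j, 0 <= d j by move=> j; rewrite /d subr_ge0 ws_M.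
have dle : forall j, d j <= lst * ws j.
  move=> j; rewrite /d gerBl; apply: (@le_trans _ _ (dl * vsum ws)).
    apply: mulr_ge0; [exact: ltW | apply: sum_ge0 => k; exact: ltW (ws_pos k)].
  exact: Mposv (fun k => ltW (ws_pos k)) j.
suff : vsum d <= 0.
  move=> h; have := le_sum_term i d0; have := d0 i; rewrite /d; lra.
rewrite leNgt; apply/negP => sd.
have lp := lst_pos.
set eta := (2 * lst)^-1.
have etal : eta * lst = 2^-1 by rewrite /eta invfM -mulrA mulVf ?mulr1 // gt_eqF.
have eta0 : 0 < eta by rewrite invr_gt0; lra.
set w' := fun j => ws j - eta * d j.
have f1 : forall j, lst * (eta * d j) = d j / 2.
  by move=> j; rewrite mulrA (mulrC lst) etal mulrC.
have ed0 : forall j, 0 <= eta * d j by move=> j; apply: mulr_ge0; [exact: ltW | exact: d0].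
have wp : forall j, 0 < w' j.
  move=> j; rewrite /w'.
  have : eta * d j <= eta * (lst * ws j) by rewrite ler_pM2l // dle.
  rewrite mulrA etal; have := ws_pos j; lra.
have wle : forall j, w' j <= ws j.
  by move=> j; rewrite /w' gerBl; exact: ed0.
have E : vadd w' (fun j => eta * d j) = ws by apply/funext => j; rewrite /vadd /w' subrK.
have hlow := Mlow w' ed0; rewrite E in hlow.
have se : vsum (fun j => eta * d j) = eta * vsum d by rewrite /vsum mulr_sumr.
set c := dl * (eta * vsum d).
have c0 : 0 < c by rewrite /c mulr_gt0 // mulr_gt0.
have : Lam (lst - c).
  exists w'; split => // j; have := hlow j; rewrite se -/c.
  have f2 : c * w' j <= c by rewrite ger_pMr // (le_trans (wle j) (ws_le1 j)).
  have hw : (lst - c) * w' j = lst * ws j - d j / 2 - c * w' j.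
    by rewrite mulrBl {1}/w' mulrBr f1.
  have hd : M ws j = lst * ws j - d j by rewrite /d; lra.
  rewrite hw hd; have := d0 j; lra.
move/lst_le; lra.
Qed.

Theorem PF : exists (v : vec) (r : R), (forall i, 0 < v i) /\ forall i, M v i = r * v i.
Proof. by exists ws, lst; split; [exact: ws_pos | exact: ws_eig]. Qed.
End PF.



Section Abs.
Variables (R : realType) (n : nat).
Local Notation vec := ('I_n -> R).
Variable f : vec -> vec.
Hypothesis fhom : forall t v, 0 < t -> f (vscale t v) = vscale t (f v).
Hypothesis fsadd : forall v w i, f v i + f w i <= f (vadd v w) i.
Hypothesis foff : forall i j, i != j -> 0 < f (ev j) i.

Definition L := 1 + \sum_i `|f (ev i) i|.
Definition g (v : vec) : vec := fun i => f v i + L * v i.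

Lemma ghom t v : 0 < t -> g (vscale t v) = vscale t (g v).
Proof.
by move=> t0; apply/funext => i; rewrite /g fhom // /vscale mulrDr mulrCA.
Qed.

Lemma gsadd v w i : g v i + g w i <= g (vadd v w) i.
Proof.
rewrite /g /vadd mulrDr; have := fsadd v w i; lra.
Qed.

Lemma gev i j : 0 < g (ev j) i.
Proof.
rewrite /g /ev; case: eqP => [->|/eqP ij]; last by rewrite mulr0 addr0 foff.
rewrite mulr1 /L; have := le_sum_term j (fun k => normr_ge0 (f (ev k) k)).
rewrite /vsum; have := ler_norm (- f (ev j) j); rewrite normrN; lra.
Qed.

Lemma gdl : exists2 dl, 0 < dl & forall i j, dl <= g (ev j) i.
Proof.
have : forall i, exists r, [/\ 0 < r, r <= 1 & forall j, r <= g (ev j) i].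
  move=> i; apply: posmin => //; exact: gev.
case/fin_all_exists => r hr.
have [dl [dl0 _ hdl]] := @posmin _ _ r 1 ltr01 (fun i => let: And3 x _ _ := hr i in x).
by exists dl => // i j; have [_ _ hh] := hr i; exact: le_trans (hdl i) (hh j).
Qed.

Definition Kc := \sum_i \sum_j `|g (vneg (ev j)) i|.

Lemma Kc0 : 0 <= Kc.
Proof. by apply: sumr_ge0 => i _; apply: sumr_ge0 => j _. Qed.

Lemma gnegz (z : vec) : (forall j, 0 <= z j) -> forall i, - g (vneg z) i <= Kc * vsum z.
Proof.
move=> z0 i; have h := Fneg ghom gsadd z0 i.
suff : - \sum_j z j * g (vneg (ev j)) i <= Kc * vsum z by lra.
rewrite -sumrN /vsum mulr_sumr; apply: ler_sum => j _.
rewrite -mulrN mulrC ler_wpM2r //.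
apply: le_trans (_ : `|g (vneg (ev j)) i| <= _); first by rewrite -normrN ler_norm.
apply: le_trans (_ : \sum_j0 `|g (vneg (ev j0)) i| <= _).
  by apply: (le_sum_term j (fun k => normr_ge0 (g (vneg (ev k)) i))).
exact: (le_sum_term i (fun k => sumr_ge0 _ (fun j0 _ => normr_ge0 (g (vneg (ev j0)) k)))).
Qed.

Lemma gposz dl : (forall i j, dl <= g (ev j) i) ->
  forall (z : vec), (forall j, 0 <= z j) -> forall i, dl * vsum z <= g z i.
Proof.
move=> hdl z z0 i; apply: le_trans (Fpos ghom gsadd z0 i).
rewrite /vsum mulr_sumr; apply: ler_sum => j _; rewrite mulrC ler_wpM2l //.
Qed.

Definition h (x : vec) : vec := vneg (g (vneg x)).

Lemma vneg_scale t (x : vec) : vneg (vscale t x) = vscale t (vneg x).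
Proof. by apply/funext => i; rewrite /vneg /vscale mulrN. Qed.

Lemma hhom t v : 0 < t -> h (vscale t v) = vscale t (h v).
Proof. by move=> t0; rewrite /h vneg_scale ghom // vneg_scale. Qed.

Lemma forward : (0 < n)%N -> ~ (exists w, forall i, 0 < f w i) ->
  (exists v : vec, vlt (vcst 0) v /\ vle (f v) (vcst 0)) /\
  (exists p : vec, vlt p (vcst 0) /\ vle (f p) (vcst 0)).
Proof.
move=> n0 H; have [dl dl0 hdl] := gdl.
have gz := gposz hdl.
split.
- have := @PF R n g dl Kc n0 ghom dl0 Kc0.
  case.
  + move=> x z z0 i; apply: le_trans (gsadd x z i); rewrite lerD2l; exact: gz.
  + move=> x z z0 i.
    have E : vadd (vadd x z) (vneg z) = x by apply/funext => j; rewrite /vadd /vneg addrK.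
    have := gsadd (vadd x z) (vneg z) i; rewrite E; have := gnegz z0 i; lra.
  move=> v [r [vp hv]]; exists v; split => // i.
  have fv : forall i, f v i = (r - L) * v i by move=> j; have := hv j; rewrite /g mulrBl; lra.
  rewrite fv /vcst; case: (lerP r L) => rL; first by rewrite mulr_le0_ge0 ?subr_le0 // ltW.
  exfalso; apply: H; exists v => j; rewrite fv mulr_gt0 // subr_gt0 //.
- have := @PF R n h dl Kc n0 hhom dl0 Kc0.
  case.
  + move=> x z z0 i.
    have E : vadd (vneg (vadd x z)) z = vneg x by apply/funext => j; rewrite /vadd /vneg opprD addrNK.
    have := gsadd (vneg (vadd x z)) z i; rewrite E /h /vneg.
    have := gz z z0 i; lra.
  + move=> x z z0 i.
    have E : vneg (vadd x z) = vadd (vneg x) (vneg z) by apply/funext => j; rewrite /vadd /vneg opprD.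
    rewrite /h {1}/vneg E; have := gsadd (vneg x) (vneg z) i; have := gnegz z0 i.
    rewrite /vneg; lra.
  move=> x [r [xp hx]]; exists (vneg x); split.
    by move=> i; rewrite /vneg /vcst oppr_lt0.
  have fx : forall i, f (vneg x) i = (L - r) * x i.
    by move=> j; have := hx j; rewrite /h /g /vneg mulrBl mulrN; lra.
  move=> i; rewrite fx /vcst; case: (lerP L r) => rL; first by rewrite mulr_le0_ge0 ?subr_le0 // ltW.
  exfalso; apply: H; exists (vneg x) => j; rewrite fx mulr_gt0 // subr_gt0 //.
Qed.

Lemma contra_dir (q w : vec) (s : R) k : vle (f q) (vcst 0) -> 0 <= s ->
  vle w (vscale s q) -> w k = s * q k -> (forall i, 0 < f w i) -> False.
Proof.
move=> fq s0 wle wk fw.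
set z : vec := fun i => s * q i - w i.
have z0 : forall j, 0 <= z j by move=> j; rewrite /z subr_ge0; exact: wle.
have E : vadd w z = vscale s q by apply/funext => j; rewrite /vadd /z /vscale addrC subrK.
have h1 := fsadd w z k; rewrite E (hom0 fhom _ s0) /vscale in h1.
have h2 := Fpos fhom fsadd z0 k.
have h3 : 0 <= \sum_j z j * f (ev j) k.
  apply: sumr_ge0 => j _; case: (eqVneq j k) => [->|jk].
    by rewrite /z wk subrr mul0r.
  by rewrite mulr_ge0 // ltW // foff // eq_sym.
have h4 : s * f q k <= 0 by rewrite mulr_ge0_le0 //; exact: fq.
have := fw k; lra.
Qed.

Lemma backward (v p w : vec) j : vlt (vcst 0) v -> vle (f v) (vcst 0) ->
  vlt p (vcst 0) -> vle (f p) (vcst 0) ->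
  (forall i, 0 <= f w i) -> 0 < f w j -> False.
Proof.
move=> vp fv pn fp fw0 fwj.
set c := f (ev j) j.
set e := f w j / (1 + `|c|).
have c1 : 0 < 1 + `|c| by rewrite ltr_pwDl.
have e0 : 0 < e by rewrite divr_gt0.
have ec : e * `|c| < f w j.
  rewrite /e mulrAC ltr_pdivrMr // ltr_pM2l //; lra.
set w' := vadd w (vscale e (ev j)).
have fw' : forall i, 0 < f w' i.
  move=> i; apply: lt_le_trans (fsadd _ _ i); rewrite fhom // /vscale.
  case: (eqVneq i j) => [->|ij].
    have := ler_norm (- c); rewrite normrN -/c.
    have : e * - c <= e * `|c| by rewrite ler_pM2l // ler_normr lexx orbT.
    lra.
  by apply: ltr_pwDr; [rewrite mulr_gt0 // foff | exact: fw0].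
have [k hk] := exmax j (fun i => w' i / v i).
have vk := vp k; rewrite /vcst in vk.
case: (lerP 0 (w' k / v k)) => c0.
  apply: (contra_dir (k := k) fv c0 _ _ fw'); last by rewrite divfK ?gt_eqF.
  move=> i; rewrite /vscale; have := hk i; have := vp i; rewrite /vcst => vi.
  by rewrite ler_pdivrMr.
have wn : forall i, w' i < 0.
  move=> i; have := hk i; have := vp i; rewrite /vcst => vi hi.
  have : w' i / v i < 0 by apply: le_lt_trans hi c0.
  by rewrite pmulr_llt0 // invr_gt0.
have [k' hk'] := exmax j (fun i => - (w' i / p i)).
have pk := pn k'; rewrite /vcst in pk.
have s0 : 0 <= w' k' / p k' by rewrite ltW // nmulr_rgt0 ?wn // invr_lt0.
apply: (contra_dir (k := k') fp s0 _ _ fw'); last by rewrite divfK ?lt_eqF.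
move=> i; rewrite /vscale; have := hk' i; rewrite lerN2 => hi.
have pi := pn i; rewrite /vcst in pi.
have -> : w' i = (w' i / p i) * p i by rewrite divfK ?lt_eqF.
by rewrite ler_wnM2r // ltW.
Qed.
End Abs.



Section RightLim.
Variable R : realType.
Lemma right_epsP (P : R -> Prop) :
  (\forall y \near (0:R)^'+, P y) <-> exists2 d : R, 0 < d & forall y, 0 < y -> y < d -> P y.
Proof.
split.
  move=> [d /= d0 H]; exists d => // y y0 yd; apply: H => //=.
  by rewrite sub0r normrN gtr0_norm.
move=> [d d0 H]; exists d => //= y /=; rewrite sub0r normrN => yd y0.
by apply: H => //; rewrite -(gtr0_norm y0).
Qed.

Lemma cvg_rightP (q : R -> R) (d : R) :
  (q @ (0:R)^'+ --> (d : R^o)) <->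
  (forall e, 0 < e -> exists2 del : R, 0 < del & forall l, 0 < l -> l < del -> `|q l - d| <= e).
Proof.
split.
  move/cvgrPdist_le => H e e0; have := H e e0; move/right_epsP => [del del0 Hd].
  by exists del => // l l0 ld; rewrite distrC; apply: Hd.
move=> H; apply/cvgrPdist_le => e e0; apply/right_epsP.
have [del del0 Hd] := H e e0; exists del => // l l0 ld; rewrite distrC; exact: Hd.
Qed.
End RightLim.

Section U.
Variables (R : realType) (n : nat).
Local Notation vec := ('I_n -> R).
Variables (u : vec -> vec) (a : vec).
Hypothesis hu : public_goods_utility u.
Variable rho : R.
Hypothesis rho0 : 0 < rho.
Hypothesis rho1 : rho <= 1.
Hypothesis rhoa : forall i, rho <= a i.
Hypothesis rhoa1 : forall i, rho <= 1 - a i.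

Definition pt (l : R) (v : vec) : vec := vadd a (vscale l v).
Definition lam (v : vec) : R := rho / (1 + vsum (fun j => `|v j|)).
Definition q (v : vec) i (l : R) : R := (u (pt l v) i - u a i) / l.

Lemma S1pos (v : vec) : 0 < 1 + vsum (fun j => `|v j|).
Proof. by rewrite ltr_pwDl // sum_ge0. Qed.

Lemma lam_pos v : 0 < lam v.
Proof. by rewrite /lam divr_gt0 // S1pos. Qed.

Lemma lam_le1 v : lam v <= 1.
Proof.
rewrite /lam ler_pdivrMr ?S1pos // mul1r; apply: le_trans rho1 _.
by rewrite lerDl sum_ge0.
Qed.

Lemma pt_out l v : `|l| <= lam v -> outcome (pt l v).
Proof.
move=> hl j; rewrite /pt /vadd /vscale.
have hS : `|v j| <= 1 + vsum (fun j => `|v j|).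
  apply: le_trans (le_sum_term j (fun k => normr_ge0 (v k))) _; rewrite lerDr //.
have E : lam v * (1 + vsum (fun j => `|v j|)) = rho by rewrite /lam divfK // gt_eqF // S1pos.
have h1 : `|l * v j| <= rho.
  rewrite normrM -E; apply: le_trans (_ : `|l| * (1 + vsum (fun j => `|v j|)) <= _).
    by rewrite ler_wpM2l.
  by rewrite ler_wpM2r // ltW // S1pos.
move: h1; rewrite ler_norml => /andP [h2 h3].
have := rhoa j; have := rhoa1 j; move=> r1 r2; apply/andP; split; lra.
Qed.

Lemma conc (x y : vec) t : outcome x -> outcome y -> 0 <= t <= 1 ->
  forall i, t * u x i + (1 - t) * u y i <= u (vadd (vscale t x) (vscale (1 - t) y)) i.
Proof. by case: hu => _ _ hc _ ox oy ht i; exact: (hc x y t ox oy ht i). Qed.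

Lemma a_out : outcome a.
Proof.
have := pt_out (l := 0) (v := a); rewrite normr0 => /(_ (ltW (lam_pos a))).
by have -> : pt 0 a = a by apply/funext => j; rewrite /pt /vadd /vscale mul0r addr0.
Qed.

Lemma q_mono v i l1 l2 : 0 < l1 -> l1 <= l2 -> outcome (pt l2 v) -> q v i l2 <= q v i l1.
Proof.
move=> l10 l12 o2; have l20 := lt_le_trans l10 l12.
set t := l1 / l2.
have t0 : 0 <= t <= 1.
  by apply/andP; split; [apply: divr_ge0; exact: ltW | rewrite /t ler_pdivrMr // mul1r].
have E : pt l1 v = vadd (vscale t (pt l2 v)) (vscale (1 - t) a).
  apply/funext => j; rewrite /pt /vadd /vscale /t; field; exact: lt0r_neq0.
have oa := a_out.
have h := conc o2 oa t0 i; rewrite -E in h.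
rewrite /q ler_pdivlMr //.
have -> : (u (pt l2 v) i - u a i) / l2 * l1 = t * u (pt l2 v) i + (1 - t) * u a i - u a i.
  by rewrite /t; field; exact: lt0r_neq0.
lra.
Qed.

Lemma q_ub v i l m : 0 < l -> 0 < m -> outcome (pt l v) -> outcome (pt (- m) v) ->
  q v i l <= (u a i - u (pt (- m) v) i) / m.
Proof.
move=> l0 m0 ol om.
set t := m / (l + m).
have lm0 : 0 < l + m by rewrite addr_gt0.
have t0 : 0 <= t <= 1.
  by apply/andP; split; [apply: divr_ge0; exact: ltW | rewrite /t ler_pdivrMr // mul1r lerDr ltW].
have E : a = vadd (vscale t (pt l v)) (vscale (1 - t) (pt (- m) v)).
  apply/funext => j; rewrite /pt /vadd /vscale /t; field; exact: lt0r_neq0.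
have h := conc ol om t0 i; rewrite -E in h.
have e1 : 1 - t = l / (l + m) by rewrite /t; field; exact: lt0r_neq0.
rewrite e1 /t in h.
set X := u (pt l v) i; set Y := u (pt (- m) v) i; set A := u a i.
have h' : m * X + l * Y <= (l + m) * A.
  have E2 : m * X + l * Y = (l + m) * (m / (l + m) * X + l / (l + m) * Y).
    by field; exact: lt0r_neq0.
  by rewrite E2 ler_pM2l.
rewrite /q -/X -/A ler_pdivrMr // mulrAC ler_pdivlMr //; nra.
Qed.

Lemma pt_out_le l v : 0 < l -> l <= lam v -> outcome (pt l v).
Proof. by move=> l0 ll; apply: pt_out; rewrite gtr0_norm. Qed.

Lemma lam_out v : outcome (pt (lam v) v).
Proof. exact: pt_out_le (lam_pos v) (lexx _). Qed.

Lemma lam_outN v : outcome (pt (- lam v) v).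
Proof. by apply: pt_out; rewrite normrN gtr0_norm ?lam_pos. Qed.

Definition Qset (v : vec) i := [set q v i l | l in [set l : R | 0 < l <= lam v]].
Definition fd (v : vec) : vec := fun i => sup (Qset v i).

Lemma Qsup v i : has_sup (Qset v i).
Proof.
split; first by exists (q v i (lam v)), (lam v) => //=; rewrite lam_pos lexx.
exists ((u a i - u (pt (- lam v) v) i) / lam v) => _ [l /andP [l0 ll] <-].
by apply: q_ub => //; [exact: lam_pos | exact: pt_out_le | exact: lam_outN].
Qed.

Lemma D1 v i l : 0 < l -> l <= lam v -> q v i l <= fd v i.
Proof.
move=> l0 ll; apply: ub_le_sup; first exact: (Qsup v i).2.
by exists l => //=; rewrite l0 ll.
Qed.

Lemma D1' v i l : 0 < l -> outcome (pt l v) -> q v i l <= fd v i.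
Proof.
move=> l0 ol; case: (lerP l (lam v)) => ll; first exact: D1.
apply: le_trans (D1 i (lam_pos v) (lexx _)).
exact: q_mono (lam_pos v) (ltW ll) ol.
Qed.

Lemma D2 v i e : 0 < e -> exists l0, [/\ 0 < l0, l0 <= lam v &
  forall l, 0 < l -> l <= l0 -> fd v i - e < q v i l].
Proof.
move=> e0; have [_ [l0 /andP [l00 l0l] <-] hlt] := sup_adherent e0 (Qsup v i).
exists l0; split => // l lp ll.
apply: lt_le_trans hlt _; apply: q_mono => //; exact: pt_out_le.
Qed.

Lemma D3 v : dir_deriv u a v (fd v).
Proof.
move=> i; apply/cvg_rightP => e e0; have [l0 [l00 l0l hl]] := @D2 v i e e0.
exists l0 => // l lp ll.
change (`|q v i l - fd v i| <= e).
have h1 := hl l lp (ltW ll).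
have h2 := D1 i lp (le_trans (ltW ll) l0l).
rewrite ler_norml; apply/andP; split; lra.
Qed.

Lemma D4 v d : dir_deriv u a v d -> forall i, d i = fd v i.
Proof.
move=> hd i; have h1 := hd i; have h2 := @D3 v i.
move/cvg_rightP in h1; move/cvg_rightP in h2.
apply/eqP; rewrite -subr_eq0 -normr_le0; apply: (eps_le (c := 2)) => // e e0.
rewrite add0r.
have [d1 d10 H1] := h1 e e0; have [d2 d20 H2] := h2 e e0.
set m := Num.min d1 d2.
have m0 : 0 < m by rewrite lt_min d10 d20.
have md1 : m <= d1 by rewrite ge_min lexx.
have md2 : m <= d2 by rewrite ge_min lexx orbT.
have l0 : 0 < m / 2 by rewrite divr_gt0.
have lm : m / 2 < m by rewrite ltr_pdivrMr // ltr_pMr // ltr1n.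
have := H1 _ l0 (lt_le_trans lm md1); have := H2 _ l0 (lt_le_trans lm md2).
rewrite !ler_norml => /andP [a1 a2] /andP [b1 b2].
apply/andP; split; lra.
Qed.

Lemma fd_hom t v : 0 < t -> fd (vscale t v) = vscale t (fd v).
Proof.
move=> t0; apply/funext => i; rewrite /vscale.
have Eq : forall l, 0 < l -> q (vscale t v) i l = t * q v i (l * t).
  move=> l l0; rewrite /q; have -> : pt l (vscale t v) = pt (l * t) v.
    by apply/funext => j; rewrite /pt /vadd /vscale mulrA.
  by field; rewrite lt0r_neq0 // lt0r_neq0.
apply/eqP; rewrite eq_le; apply/andP; split.
  apply: ge_sup; first by exists (q (vscale t v) i (lam (vscale t v))), (lam (vscale t v)) => //=; rewrite lam_pos lexx.
  move=> _ [l /andP [l0 ll] <-]; rewrite Eq // ler_pM2l //.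
  apply: D1'; first by rewrite mulr_gt0.
  have -> : pt (l * t) v = pt l (vscale t v).
    by apply/funext => j; rewrite /pt /vadd /vscale mulrA.
  exact: pt_out_le.
apply: (eps_le (c := t)) => [|e e0]; first exact: ltW.
have [l0 [l00 l0l hl0]] := @D2 v i e e0.
set l := Num.min (l0 / t) (lam (vscale t v)).
have lp : 0 < l by rewrite lt_min divr_gt0 // lam_pos.
have h1 := D1 i lp (_ : l <= lam (vscale t v)).
have {h1} h1 := h1 ltac:(by rewrite ge_min lexx orbT).
rewrite Eq // in h1.
have lt : l * t <= l0 by rewrite -ler_pdivlMr // ge_min lexx.
have h2 := hl0 _ (mulr_gt0 lp t0) lt.
have h3 : t * (fd v i - e) <= t * q v i (l * t) by rewrite ler_pM2l // ltW.
rewrite mulrBr in h3; lra.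
Qed.

Lemma q_mid v w i l : 0 < l -> outcome (pt (2 * l) v) -> outcome (pt (2 * l) w) ->
  q v i (2 * l) + q w i (2 * l) <= q (vadd v w) i l.
Proof.
move=> l0 o1 o2.
have E : pt l (vadd v w) = vadd (vscale 2^-1 (pt (2 * l) v)) (vscale (1 - 2^-1) (pt (2 * l) w)).
  by apply/funext => j; rewrite /pt /vadd /vscale; field.
have t0 : 0 <= (2^-1 : R) <= 1.
  by apply/andP; split; [rewrite invr_ge0 ler0n | rewrite invf_le1 // ler1n].
have h := conc o1 o2 t0 i; rewrite -E in h.
rewrite /q.
have -> : (u (pt (2 * l) v) i - u a i) / (2 * l) + (u (pt (2 * l) w) i - u a i) / (2 * l)
   = (2^-1 * u (pt (2 * l) v) i + (1 - 2^-1) * u (pt (2 * l) w) i - u a i) / l.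
  by field; exact: lt0r_neq0.
rewrite ler_pM2r ?invr_gt0 //; lra.
Qed.

Lemma fd_sadd v w i : fd v i + fd w i <= fd (vadd v w) i.
Proof.
apply: (eps_le (c := 2)) => // e e0.
have [l1 [l10 l1l hl1]] := @D2 v i e e0.
have [l2 [l20 l2l hl2]] := @D2 w i e e0.
set m := Num.min (Num.min l1 l2) (lam (vadd v w)).
have m0 : 0 < m by rewrite !lt_min l10 l20 lam_pos.
have m1 : m <= l1 by rewrite !ge_min lexx.
have m2 : m <= l2 by rewrite !ge_min lexx !orbT.
have m3 : m <= lam (vadd v w) by rewrite !ge_min lexx !orbT.
have E2 : 2 * (m / 2) = m by field.
have h := @q_mid v w i (m / 2) (divr_gt0 m0 (ltr0Sn R 1)).
rewrite E2 in h.
have := h (pt_out_le m0 (le_trans m1 l1l)) (pt_out_le m0 (le_trans m2 l2l)).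
have hD := @D1 (vadd v w) i (m / 2) (divr_gt0 m0 (ltr0Sn R 1)).
have m4 : m / 2 <= lam (vadd v w).
  by apply: (le_trans _ m3); rewrite ler_pdivrMr // ler_pMr // ler1n.
have := hD m4.
have := hl1 _ m0 m1; have := hl2 _ m0 m2.
lra.
Qed.

Lemma fd_off i j : i != j -> 0 < fd (ev j) i.
Proof.
move=> ij; set l := lam (ev j).
have o := lam_out (ev j).
case: hu => _ _ _ pe.
have hv : vlne a (pt l (ev j)).
  split.
    move=> k; rewrite /pt /vadd /vscale lerDl; apply: mulr_ge0; first exact: ltW (lam_pos _).
    by rewrite /ev ler0n.
  by exists j; rewrite /pt /vadd /vscale /ev eqxx mulr1 ltrDl lam_pos.
have hi : a i = pt l (ev j) i by rewrite /pt /vadd /vscale /ev (negbTE ij) mulr0 addr0.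
have := pe _ _ i o a_out hv (esym hi) => hlt.
apply: lt_le_trans (D1 i (lam_pos _) (lexx _)).
by rewrite /q divr_gt0 ?lam_pos // subr_gt0.
Qed.

Lemma fd_gain a' : outcome a' -> forall i, u a' i - u a i <= fd (fun j => a' j - a j) i.
Proof.
move=> oa' i; set w := fun j => a' j - a j.
have E1 : pt 1 w = a' by apply/funext => j; rewrite /pt /vadd /vscale /w mul1r addrC subrK.
have h := q_mono (v := w) i (lam_pos w) (lam_le1 w).
rewrite E1 in h; have := h oa'.
rewrite /q E1 divr1 => h1; apply: le_trans h1 _.
exact: (@D1 w i (lam w) (lam_pos w) (lexx _)).
Qed.

Lemma fd_H : (0 < n)%N -> pareto_efficient u a -> ~ exists w, forall i, 0 < fd w i.
Proof.
move=> n0 pe [w hw].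
have : forall i, exists l0, [/\ 0 < l0, l0 <= lam w & forall l, 0 < l -> l <= l0 -> 0 < q w i l].
  move=> i; have [l0 [l00 l0l hl]] := @D2 w i _ (hw i); exists l0; split => // l lp ll.
  by have := hl l lp ll; rewrite subrr.
case/fin_all_exists => l0 hl0.
have [r [r0 _ hr]] := @posmin _ _ l0 1 ltr01 (fun i => let: And3 x _ _ := hl0 i in x).
set i0 : 'I_n := Ordinal n0.
have hpos : forall i, u a i < u (pt r w) i.
  move=> i; have [_ _ hh] := hl0 i; have := hh r r0 (hr i).
  by rewrite /q ltr_pdivlMr // mul0r subr_gt0.
apply: pe; exists (pt r w); split.
  apply: pt_out_le => //; have [_ hh _] := hl0 i0; exact: le_trans (hr i0) hh.
by split; [move=> i; exact: ltW (hpos i) | exists i0; exact: hpos].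
Qed.

Lemma main_U : (0 < n)%N ->
  (pareto_efficient u a <->
   exists (vup vdown dup ddown : vec),
     [/\ vlt (vcst 0) vup, vlt vdown (vcst 0),
         dir_deriv u a vup dup /\ vle dup (vcst 0) &
         dir_deriv u a vdown ddown /\ vle ddown (vcst 0)]).
Proof.
move=> n0; split.
  move=> pe.
  have [[v [vp fv]] [p [pn fp]]] := forward fd_hom fd_sadd fd_off n0 (fd_H n0 pe).
  by exists v, p, (fd v), (fd p); split => //; split => //; exact: D3.
move=> [vup [vdown [dup [ddown [hv hp [dv dle] [dp dpe]]]]]] [a' [oa' [hle [j hj]]]].
have fv : vle (fd vup) (vcst 0) by move=> i; rewrite -(D4 dv i); exact: dle.
have fp : vle (fd vdown) (vcst 0) by move=> i; rewrite -(D4 dp i); exact: dpe.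
apply: (backward fd_hom fd_sadd fd_off (j := j) (w := fun k => a' k - a k) hv fv hp fp).
  move=> i; apply: (le_trans _ (fd_gain oa' i)); rewrite subr_ge0; exact: hle.
apply: (lt_le_trans _ (fd_gain oa' j)); rewrite subr_gt0; exact: hj.
Qed.
End U.

Unset Implicit Arguments.
Local Close Scope classical_set_scope.

Theorem lemma4 (R : realType) (n : nat) (u : vec R n -> vec R n) (a : vec R n) :
  public_goods_utility u ->
  vlt (vcst 0) a -> vlt a (vcst 1) ->
  (pareto_efficient u a <->
   exists (vup vdown dup ddown : vec R n),
     [/\ vlt (vcst 0) vup, vlt vdown (vcst 0),
         dir_deriv u a vup dup /\ vle dup (vcst 0) &
         dir_deriv u a vdown ddown /\ vle ddown (vcst 0)]).
Proof.
move=> hu ha0 ha1.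
case: (posnP n) => [n0|npos].
  have E : forall i : 'I_n, False by move=> [i]; rewrite n0.
  split => [_|_].
    exists (vcst 1), (vcst (-1)), (vcst 0), (vcst 0).
    by split; try split; move=> i; case: (E i).
  by move=> [a' [_ [_ [j _]]]]; case: (E j).
have hpos : forall i, 0 < Num.min (a i) (1 - a i).
  move=> i; rewrite lt_min; have := ha0 i; have := ha1 i; rewrite /vcst => h1 h0.
  by rewrite h0 subr_gt0 h1.
have [rho [rho0 rho1 hrho]] := @posmin R n (fun i => Num.min (a i) (1 - a i)) 1 ltr01 hpos.
have rhoa : forall i, rho <= a i.
  by move=> i; have := hrho i; rewrite /= le_min => /andP [].
have rhoa1 : forall i, rho <= 1 - a i.
  by move=> i; have := hrho i; rewrite /= le_min => /andP [].
exact: (@main_U R n u a hu rho rho0 rho1 rhoa rhoa1 npos).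
Qed.
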